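(* Let $(\mathfrak g,r)$ be a triangular Lie bialgebra. For $\mu\in\mathbb R$ define $R_\mu:\mathcal D(\mathfrak g)\to\mathcal D(\mathfrak g)$ by $R_\mu(x,a^* )=(\mu r(a^* )+x,-a^* )$, and let $\tilde r_{\pm,\mu}=R_\mu\varphi^{-1}\pm\varphi^{-1}:\mathcal D(\mathfrak g)^*\to\mathcal D(\mathfrak g)$, regarded as elements of $\mathcal D(\mathfrak g)\otimes\mathcal D(\mathfrak g)$. Then for each sign, $\tilde r_{\pm,\mu}$ is a solution of the CYBE in $\mathcal D(\mathfrak g)$ whose symmetric part is invariant and invertible (as a map $\mathcal D(\mathfrak g)^*\to\mathcal D(\mathfrak g)$); thus $(\mathcal D(\mathfrak g),\tilde r_{\pm,\mu})$, with cocommutator $\delta(X)=(\mathrm{ad}(X)\otimes\mathrm{id}+\mathrm{id}\otimes\mathrm{ad}(X))\tilde r_{\pm,\mu}$, is a factorizable quasitriangular Lie bialgebra.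
   Context: $\mathfrak g$ a finite-dimensional real Lie algebra; an element $t\in V\otimes V$ is identified with $t:V^*\to V$ via $\langle t(a),b\rangle=\langle a\otimes b,t\rangle$. $(\mathfrak g,r)$ triangular: $r\in\mathfrak g\otimes\mathfrak g$ is skew-symmetric and satisfies the CYBE $[r_{12},r_{13}]+[r_{12},r_{23}]+[r_{13},r_{23}]=0$ (for $r=\sum a_i\otimes b_i$: $[r_{12},r_{13}]=\sum[a_i,a_j]\otimes b_i\otimes b_j$, $[r_{12},r_{23}]=\sum a_i\otimes[b_i,a_j]\otimes b_j$, $[r_{13},r_{23}]=\sum a_i\otimes a_j\otimes[b_i,b_j]$). Coadjoint action $\langle\mathrm{ad}^*(x)a^*,y\rangle=-\langle a^*,[x,y]\rangle$; $[a^*,b^*]_\delta=\mathrm{ad}^*(r(a^* ))b^*-\mathrm{ad}^*(r(b^* ))a^*$; $\langle\mathrm{ad}^*(a^* )x,b^*\rangle=-\langle x,[a^*,b^*]_\delta\rangle$. The Drinfeld double $\mathcal D(\mathfrak g)=\mathfrak g\oplus\mathfrak g^*$ has bracket $[(x,a^* ),(y,b^* )]=([x,y]+\mathrm{ad}^*(a^* )y-\mathrm{ad}^*(b^* )x,[a^*,b^*]_\delta+\mathrm{ad}^*(x)b^*-\mathrm{ad}^*(y)a^* )$ and the nondegenerate symmetric invariant form $\mathfrak B_p((x,a^* ),(y,b^* ))=\langle a^*,y\rangle+\langle x,b^*\rangle$; $\varphi:\mathcal D(\mathfrak g)\to\mathcal D(\mathfrak g)^*$ is defined by $\mathfrak B_p(X,Y)=\langle\varphi(X),Y\rangle$.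 Symmetric part of $t$: $(t+\sigma(t))/2$; invariant means annihilated by $\mathrm{ad}(X)\otimes\mathrm{id}+\mathrm{id}\otimes\mathrm{ad}(X)$ for all $X$. *)

(* Defs.v *)
(* Coordinates: g = R^n (row vectors 'rV_n, standard basis e_i),
   g^* = R^n with the dual basis, D(g) = g (+) g^* = 'rV_(n+n), D(g)^* likewise
   (dual basis), tensors t in V (x) V as matrices (t = \sum_{ij} t i j e_i (x) e_j). *)
From HB Require Import structures.
From mathcomp Require Import all_boot all_order all_algebra.
Set Implicit Arguments. Unset Strict Implicit. Unset Printing Implicit Defensive.
Import Order.TTheory GRing.Theory Num.Theory.
Local Open Scope ring_scope.

Definition bvec {R : fieldType} {n : nat} (i : 'I_n) : 'rV[R]_n := delta_mx 0 i.

Definition brc (R : fieldType) (n : nat) (c : 'I_n -> 'I_n -> 'rV[R]_n)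
  (x y : 'rV[R]_n) : 'rV[R]_n :=
  \sum_(i < n) \sum_(j < n) (x 0 i * y 0 j) *: c i j.

(* natural pairing <a, x> between V^* and V (dual bases) *)
Definition pair (R : fieldType) (n : nat) (a x : 'rV[R]_n) : R :=
  \sum_(i < n) a 0 i * x 0 i.

Definition is_lie (R : fieldType) (n : nat) (br : 'rV[R]_n -> 'rV[R]_n -> 'rV[R]_n) : Prop :=
  (forall x, br x x = 0) /\
  (forall x y z, br x (br y z) + br y (br z x) + br z (br x y) = 0).

(* t in V (x) V viewed as t : V^* -> V, <t(a), b> = <a (x) b, t> *)
Definition tmap (R : fieldType) (n : nat) (t : 'M[R]_n) (a : 'rV[R]_n) : 'rV[R]_n :=
  a *m t.

Definition tensor_of (R : fieldType) (n : nat) (f : 'rV[R]_n -> 'rV[R]_n) : 'M[R]_n :=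
  \matrix_(i, j) f (bvec i) 0 j.

(* CYBE [t12,t13] + [t12,t23] + [t13,t23] = 0, component (p,q,s) *)
Definition cybe (R : fieldType) (n : nat) (br : 'rV[R]_n -> 'rV[R]_n -> 'rV[R]_n)
  (t : 'M[R]_n) : Prop :=
  forall p q s : 'I_n,
    \sum_(i < n) \sum_(k < n) t i q * t k s * br (bvec i) (bvec k) 0 p
  + \sum_(j < n) \sum_(k < n) t p j * t k s * br (bvec j) (bvec k) 0 q
  + \sum_(j < n) \sum_(l < n) t p j * t q l * br (bvec j) (bvec l) 0 s = 0.

Definition coad (R : fieldType) (n : nat) (br : 'rV[R]_n -> 'rV[R]_n -> 'rV[R]_n)
  (x a : 'rV[R]_n) : 'rV[R]_n :=
  \row_j (- pair a (br x (bvec j))).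

Definition brd (R : fieldType) (n : nat) (br : 'rV[R]_n -> 'rV[R]_n -> 'rV[R]_n)
  (r : 'M[R]_n) (a b : 'rV[R]_n) : 'rV[R]_n :=
  coad br (tmap r a) b - coad br (tmap r b) a.

Definition coad_star (R : fieldType) (n : nat) (br : 'rV[R]_n -> 'rV[R]_n -> 'rV[R]_n)
  (r : 'M[R]_n) (a x : 'rV[R]_n) : 'rV[R]_n :=
  \row_j (- pair (brd br r a (bvec j)) x).

(* Drinfeld double bracket on D(g) = g (+) g^*, X = (lsubmx X, rsubmx X) *)
Definition dbr (R : fieldType) (n : nat) (br : 'rV[R]_n -> 'rV[R]_n -> 'rV[R]_n)
  (r : 'M[R]_n) (X Y : 'rV[R]_(n + n)) : 'rV[R]_(n + n) :=
  let x := lsubmx X in let a := rsubmx X in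
  let y := lsubmx Y in let b := rsubmx Y in
  row_mx (br x y + coad_star br r a y - coad_star br r b x)
         (brd br r a b + coad br x b - coad br y a).

Definition Bp {R : fieldType} {n : nat} (X Y : 'rV[R]_(n + n)) : R :=
  pair (rsubmx X) (lsubmx Y) + pair (lsubmx X) (rsubmx Y).

Definition Bp_mx (R : fieldType) (n : nat) : 'M[R]_(n + n) :=
  \matrix_(i, j) Bp (bvec i) (bvec j).

Definition phi (R : fieldType) (n : nat) (X : 'rV[R]_(n + n)) : 'rV[R]_(n + n) :=
  X *m Bp_mx R n.
Definition phi_inv (R : fieldType) (n : nat) (xi : 'rV[R]_(n + n)) : 'rV[R]_(n + n) :=
  xi *m invmx (Bp_mx R n).

Definition Rmu (R : fieldType) (n : nat) (r : 'M[R]_n) (mu : R)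
  (X : 'rV[R]_(n + n)) : 'rV[R]_(n + n) :=
  row_mx (mu *: tmap r (rsubmx X) + lsubmx X) (- rsubmx X).

(* r~_{+,mu} (sg = true) and r~_{-,mu} (sg = false) as maps D^* -> D *)
Definition rtilde_map (R : fieldType) (n : nat) (r : 'M[R]_n) (mu : R) (sg : bool)
  (xi : 'rV[R]_(n + n)) : 'rV[R]_(n + n) :=
  Rmu r mu (phi_inv xi) + (if sg then phi_inv xi else - phi_inv xi).

Definition symp (R : fieldType) (m : nat) (t : 'M[R]_m) : 'M[R]_m :=
  (2%:R)^-1 *: (t + t^T).

Definition ad_act (R : fieldType) (m : nat) (br : 'rV[R]_m -> 'rV[R]_m -> 'rV[R]_m)
  (X : 'rV[R]_m) (t : 'M[R]_m) : 'M[R]_m :=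
  \matrix_(p, q) (\sum_(i < m) t i q * br X (bvec i) 0 p
                + \sum_(j < m) t p j * br X (bvec j) 0 q).

Definition invariant (R : fieldType) (m : nat) (br : 'rV[R]_m -> 'rV[R]_m -> 'rV[R]_m)
  (t : 'M[R]_m) : Prop := forall X, ad_act br X t = 0.

(* quasitriangular: CYBE + invariant symmetric part; factorizable: moreover the
   symmetric part, as a map V^* -> V (a |-> a *m s), is invertible *)
Definition factorizable_qt (R : fieldType) (m : nat)
  (br : 'rV[R]_m -> 'rV[R]_m -> 'rV[R]_m) (t : 'M[R]_m) : Prop :=
  [/\ cybe br t, invariant br (symp t) & symp t \in unitmx].

(* Main.v *)
Require Import Defs.
From HB Require Import structures.
From mathcomp Require Import all_boot all_order all_algebra.
From Stdlib Require Import Ring.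
Import Order.TTheory GRing.Theory Num.Theory.
Local Open Scope ring_scope.

Section Main.
Variable R : realFieldType.

Definition addR (x y : R) : R := x + y.
Definition mulR (x y : R) : R := x * y.
Definition oppR (x : R) : R := - x.
Definition subR (x y : R) : R := x - y.
Definition zeroR : R := 0.
Definition oneR : R := 1.
Lemma Rth : @ring_theory (Num.RealField.sort R) zeroR oneR addR mulR subR oppR (@eq R).
Proof. rewrite /zeroR /oneR /addR /mulR /subR /oppR.
constructor=> //; [exact: add0r|exact: addrC|exact: addrA|exact: mul1r|exact: mulrC|exact: mulrA|exact: mulrDl|exact: subrr]. Qed.
Add Ring Rring : Rth.
Lemma addRE (x y : R) : x + y = addR x y. Proof. by []. Qed.
Lemma mulRE (x y : R) : x * y = mulR x y. Proof. by []. Qed.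
Lemma oppRE (x : R) : - x = oppR x. Proof. by []. Qed.
Lemma zeroRE : 0 = zeroR :> R. Proof. by []. Qed.
Lemma oneRE : 1 = oneR :> R. Proof. by []. Qed.
Lemma eqR (a b : R) : @eq (Num.RealField.sort R) a b -> a = b. Proof. by []. Qed.
Ltac rring := rewrite ?addRE ?mulRE ?oppRE ?zeroRE ?oneRE; apply: eqR; ring.

Lemma lin_expand m (g : 'rV[R]_m -> R) :
  (forall k x y, g (k *: x + y) = k * g x + g y) ->
  forall b, g b = \sum_(j < m) b 0 j * g (bvec j).
Proof.
move=> Hg b.
have g0 : g 0 = 0.
  have h := Hg 1 0 0; rewrite scaler0 addr0 mul1r in h.
  by apply: (addrI (g 0)); rewrite addr0 -h.
have gD : {morph g : x y / x + y}.
  by move=> x y; rewrite -{1}[x]scale1r Hg mul1r.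
rewrite {1}(row_sum_delta b) (big_morph g gD g0).
by apply: eq_bigr => j _; rewrite -[_ *: _]addr0 Hg g0 addr0.
Qed.

Lemma bil_sum m (H : 'rV[R]_m -> 'rV[R]_m -> R) :
  (forall k x x' y, H (k *: x + x') y = k * H x y + H x' y) ->
  (forall k x y y', H x (k *: y + y') = k * H x y + H x y') ->
  forall f g : 'I_m -> R,
  \sum_(i < m) \sum_(k < m) f i * g k * H (bvec i) (bvec k) =
  H (\row_i f i) (\row_k g k).
Proof.
move=> H1 H2 f g.
rewrite (@lin_expand m (fun x => H x (\row_k g k))) //.
apply: eq_bigr => i _; rewrite mxE.
rewrite (@lin_expand m (fun y => H (bvec i) y)) // mulr_sumr.
by apply: eq_bigr => k _; rewrite mxE mulrA.
Qed.

Lemma pairL m (k : R) (a b x : 'rV[R]_m) : pair (k *: a + b) x = k * pair a x + pair b x.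
Proof. rewrite /pair mulr_sumr -big_split; apply: eq_bigr => i _; by rewrite !mxE mulrDl mulrA. Qed.
Lemma pairC m (a x : 'rV[R]_m) : pair a x = pair x a.
Proof. by rewrite /pair; apply: eq_bigr => i _; rewrite mulrC. Qed.
Lemma pairR m (k : R) (a x y : 'rV[R]_m) : pair a (k *: x + y) = k * pair a x + pair a y.
Proof. by rewrite pairC pairL !(pairC _ a). Qed.
Lemma pair0l m (x : 'rV[R]_m) : pair 0 x = 0.
Proof. by rewrite /pair big1 // => i _; rewrite mxE mul0r. Qed.
Lemma pair0r m (x : 'rV[R]_m) : pair x 0 = 0.
Proof. by rewrite pairC pair0l. Qed.
Lemma pairDl m (a b x : 'rV[R]_m) : pair (a + b) x = pair a x + pair b x.
Proof. by rewrite -[a]scale1r pairL mul1r scale1r. Qed.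
Lemma pairZl m k (a x : 'rV[R]_m) : pair (k *: a) x = k * pair a x.
Proof. by rewrite -[_ *: _]addr0 pairL pair0l addr0. Qed.
Lemma pairNl m (a x : 'rV[R]_m) : pair (- a) x = - pair a x.
Proof. by rewrite -scaleN1r pairZl mulN1r. Qed.
Lemma pairDr m (a x y : 'rV[R]_m) : pair a (x + y) = pair a x + pair a y.
Proof. by rewrite pairC pairDl !(pairC _ a). Qed.
Lemma pairZr m k (a x : 'rV[R]_m) : pair a (k *: x) = k * pair a x.
Proof. by rewrite pairC pairZl !(pairC _ a). Qed.
Lemma pairNr m (a x : 'rV[R]_m) : pair a (- x) = - pair a x.
Proof. by rewrite pairC pairNl !(pairC _ a). Qed.
Lemma pair_bvec m (i : 'I_m) (x : 'rV[R]_m) : pair (bvec i) x = x 0 i.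
Proof.
rewrite /pair (bigD1 i) //= big1 ?addr0.
  by rewrite /bvec mxE !eqxx mul1r.
by move=> j /negPf ji; rewrite /bvec mxE ji andbF mul0r.
Qed.
Lemma pair_rowmx m (a b x y : 'rV[R]_m) :
  pair (row_mx a b) (row_mx x y) = pair a x + pair b y.
Proof.
rewrite /pair big_split_ord /=; congr (_ + _); apply: eq_bigr => i _.
  by rewrite !row_mxEl.
by rewrite !row_mxEr.
Qed.

Variable n : nat.
Variable c : 'I_n -> 'I_n -> 'rV[R]_n.
Variable r : 'M[R]_n.

Lemma brcL k (x x' y : 'rV[R]_n) : brc c (k *: x + x') y = k *: brc c x y + brc c x' y.
Proof.
rewrite /brc scaler_sumr -big_split; apply: eq_bigr => i _.
rewrite scaler_sumr -big_split; apply: eq_bigr => j _.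
by rewrite !mxE mulrDl scalerDl scalerA mulrA.
Qed.
Lemma brcR k (x y y' : 'rV[R]_n) : brc c x (k *: y + y') = k *: brc c x y + brc c x y'.
Proof.
rewrite /brc scaler_sumr -big_split; apply: eq_bigr => i _.
rewrite scaler_sumr -big_split; apply: eq_bigr => j _.
by rewrite !mxE mulrDr scalerDl scalerA mulrCA.
Qed.
Lemma brc0l y : brc c 0 y = 0.
Proof.
have h := brcL 1 0 0 y; rewrite scaler0 addr0 scale1r in h.
by apply: (addrI (brc c 0 y)); rewrite addr0 -h.
Qed.
Lemma brc0r y : brc c y 0 = 0.
Proof.
have h := brcR 1 y 0 0; rewrite scaler0 addr0 scale1r in h.
by apply: (addrI (brc c y 0)); rewrite addr0 -h.
Qed.
Lemma brcDl x x' y : brc c (x + x') y = brc c x y + brc c x' y.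
Proof. by rewrite -{1}[x]scale1r brcL scale1r. Qed.
Lemma brcDr x y y' : brc c x (y + y') = brc c x y + brc c x y'.
Proof. by rewrite -{1}[y]scale1r brcR scale1r. Qed.

Lemma brc_anti (Hlie : is_lie (brc c)) x y : brc c y x = - brc c x y.
Proof.
have := Hlie.1 (x + y); rewrite brcDl !brcDr Hlie.1 Hlie.1 add0r addr0.
by move/eqP; rewrite addrC addr_eq0 => /eqP.
Qed.

Definition K (a x y : 'rV[R]_n) : R := pair a (brc c x y).

Lemma Kanti (Hlie : is_lie (brc c)) a x y : K a x y = - K a y x.
Proof. by rewrite /K (brc_anti Hlie y x) pairNr. Qed.

Lemma KL k a a' x y : K (k *: a + a') x y = k * K a x y + K a' x y.
Proof. by rewrite /K pairL. Qed.
Lemma KM k a x x' y : K a (k *: x + x') y = k * K a x y + K a x' y.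
Proof. by rewrite /K brcL pairR. Qed.
Lemma KR k a x y y' : K a x (k *: y + y') = k * K a x y + K a x y'.
Proof. by rewrite /K brcR pairR. Qed.
Lemma K0l x y : K 0 x y = 0. Proof. by rewrite /K pair0l. Qed.
Lemma K0m a y : K a 0 y = 0. Proof. by rewrite /K brc0l pair0r. Qed.
Lemma K0r a y : K a y 0 = 0. Proof. by rewrite /K brc0r pair0r. Qed.
Lemma KDl a a' x y : K (a + a') x y = K a x y + K a' x y.
Proof. by rewrite -{1}[a]scale1r KL mul1r. Qed.
Lemma KDm a x x' y : K a (x + x') y = K a x y + K a x' y.
Proof. by rewrite -{1}[x]scale1r KM mul1r. Qed.
Lemma KDr a x y y' : K a x (y + y') = K a x y + K a x y'.
Proof. by rewrite -{1}[y]scale1r KR mul1r. Qed.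
Lemma KZl k a x y : K (k *: a) x y = k * K a x y.
Proof. by rewrite -[k *: a]addr0 KL K0l addr0. Qed.
Lemma KZm k a x y : K a (k *: x) y = k * K a x y.
Proof. by rewrite -[k *: x]addr0 KM K0m addr0. Qed.
Lemma KZr k a x y : K a x (k *: y) = k * K a x y.
Proof. by rewrite -[k *: y]addr0 KR K0r addr0. Qed.
Lemma KNl a x y : K (- a) x y = - K a x y.
Proof. by rewrite -scaleN1r KZl mulN1r. Qed.
Lemma KNm a x y : K a (- x) y = - K a x y.
Proof. by rewrite -scaleN1r KZm mulN1r. Qed.
Lemma KNr a x y : K a x (- y) = - K a x y.
Proof. by rewrite -scaleN1r KZr mulN1r. Qed.

Lemma pair_coad b x a : pair b (coad (brc c) x a) = - K a x b.
Proof.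
rewrite (@lin_expand n (fun b => - K a x b)); last first.
  by move=> k y y'; rewrite KR opprD mulrN.
by rewrite /pair; apply: eq_bigr => j _; rewrite mxE.
Qed.

Lemma pair_brd b a1 a2 :
  pair b (brd (brc c) r a1 a2) = - K a2 (a1 *m r) b + K a1 (a2 *m r) b.
Proof. by rewrite /brd pairDr pairNr !pair_coad opprK. Qed.

Lemma pair_cs b a x :
  pair b (coad_star (brc c) r a x) = K b (a *m r) x - K a (b *m r) x.
Proof.
rewrite (@lin_expand n (fun b => K b (a *m r) x - K a (b *m r) x)); last first.
  by move=> k y y'; rewrite KL mulmxDl -scalemxAl KM mulrBr opprD addrACA.
rewrite /pair; apply: eq_bigr => j _; rewrite mxE pairC pair_brd.
by rewrite opprD opprK addrC.
Qed.

Definition PF (al be x a y b : 'rV[R]_n) : R :=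
 K al x y + (K al (a *m r) y - K a (al *m r) y) - (K al (b *m r) x - K b (al *m r) x)
 + ((- K b (a *m r) be - - K a (b *m r) be) + - K b x be - - K a y be).

Lemma Pdbr (xi X Y : 'rV[R]_(n + n)) :
  pair xi (dbr (brc c) r X Y) =
  PF (lsubmx xi) (rsubmx xi) (lsubmx X) (rsubmx X) (lsubmx Y) (rsubmx Y).
Proof.
rewrite -{1}(hsubmxK xi) /dbr /= pair_rowmx !pairDr !pairNr !pair_cs.
by rewrite !pair_coad /PF /K /tmap.
Qed.

Lemma scalemxAl' m1 m2 m3 k (A : 'M[R]_(m1,m2)) (B : 'M[R]_(m2,m3)) : (k *: A) *m B = k *: (A *m B).
Proof. by rewrite scalemxAl. Qed.

Ltac genK := repeat match goal with |- context [K ?a ?x ?y] =>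
   let z := fresh "z" in set z := K a x y end.
Ltac Kexp := rewrite ?(KDl, KDm, KDr, KZl, KZm, KZr, KNl, KNm, KNr, K0l, K0m, K0r,
   mulmxDl, scalemxAl', mulNmx, mul0mx).

Lemma Hlin_l xi k X X' Y :
  pair xi (dbr (brc c) r (k *: X + X') Y) =
  k * pair xi (dbr (brc c) r X Y) + pair xi (dbr (brc c) r X' Y).
Proof.
rewrite !Pdbr !linearP /PF. Kexp. genK. rring.
Qed.
Lemma Hlin_r xi k X Y Y' :
  pair xi (dbr (brc c) r X (k *: Y + Y')) =
  k * pair xi (dbr (brc c) r X Y) + pair xi (dbr (brc c) r X Y').
Proof.
rewrite !Pdbr !linearP /PF. Kexp. genK. rring.
Qed.

Lemma rowT m (A : 'M[R]_m) q : \row_i A i q = bvec q *m A^T.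
Proof. by apply/rowP => i; rewrite /bvec -rowE !mxE. Qed.
Lemma rowN m (A : 'M[R]_m) p : \row_j A p j = bvec p *m A.
Proof. by apply/rowP => i; rewrite /bvec -rowE !mxE. Qed.

Lemma brc_sum p (f g : 'I_n -> R) :
  \sum_(i < n) \sum_(k < n) f i * g k * brc c (bvec i) (bvec k) 0 p =
  K (bvec p) (\row_i f i) (\row_k g k).
Proof.
rewrite -(@bil_sum n (fun x y => K (bvec p) x y)); last 2 first.
- by move=> k x x' y; rewrite KM.
- by move=> k x y y'; rewrite KR.
by apply: eq_bigr => i _; apply: eq_bigr => k _; rewrite /K pair_bvec.
Qed.

Definition Fr a b d := K a (b *m r) (d *m r) - K b (a *m r) (d *m r) + K d (a *m r) (b *m r).

Lemma rcybe_vec (Hskew : r^T = - r) (Hcybe : cybe (brc c) r) a b d : Fr a b d = 0.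
Proof.
have H0 : forall p q s, Fr (bvec p) (bvec q) (bvec s) = 0.
  move=> p q s; have := Hcybe p q s.
  rewrite (brc_sum p (fun i => r i q) (fun k => r k s)).
  rewrite (brc_sum q (fun j => r p j) (fun k => r k s)).
  rewrite (brc_sum s (fun j => r p j) (fun l => r q l)).
  rewrite !rowT !rowN Hskew !mulmxN /Fr !KNm !KNr opprK.
  by move=> <-; genK; rring.
have H1 : forall p q d, Fr (bvec p) (bvec q) d = 0.
  move=> p q d0; rewrite (@lin_expand n (fun d => Fr (bvec p) (bvec q) d)).
    by rewrite big1 // => s _; rewrite H0 mulr0.
  by move=> k x y; rewrite /Fr; Kexp; genK; rring.
have H2 : forall p b d, Fr (bvec p) b d = 0.
  move=> p b0 d0; rewrite (@lin_expand n (fun b => Fr (bvec p) b d0)).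
    by rewrite big1 // => s _; rewrite H1 mulr0.
  by move=> k x y; rewrite /Fr; Kexp; genK; rring.
rewrite (@lin_expand n (fun a => Fr a b d)).
  by rewrite big1 // => s _; rewrite H2 mulr0.
by move=> k x y; rewrite /Fr; Kexp; genK; rring.
Qed.

Definition Bsw : 'M[R]_(n + n) := block_mx 0 1%:M 1%:M 0.

Lemma BpE (X Y : 'rV[R]_(n + n)) : Bp X Y = pair X (Y *m Bsw).
Proof.
rewrite -[X](hsubmxK X) -[Y](hsubmxK Y) /Bp !row_mxKl !row_mxKr /Bsw mul_row_block.
by rewrite !mulmx0 !mulmx1 add0r addr0 pair_rowmx addrC.
Qed.

Lemma Bp_mxE : Bp_mx R n = Bsw.
Proof.
apply/matrixP => i j; rewrite mxE BpE pair_bvec /bvec -rowE mxE.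
by rewrite /Bsw -{1}[block_mx _ _ _ _]trmxK tr_block_mx !trmx0 trmx1 mxE.
Qed.

Lemma Bsw2 : Bsw *m Bsw = 1%:M.
Proof.
rewrite /Bsw mulmx_block !mulmx0 !mul0mx !mulmx1 !add0r !addr0.
by rewrite scalar_mx_block.
Qed.

Lemma invBsw : invmx Bsw = Bsw.
Proof.
have U : Bsw \in unitmx by case: (mulmx1_unit Bsw2).
by rewrite -[invmx Bsw]mul1mx -Bsw2 -mulmxA mulmxV // mulmx1.
Qed.

Variable mu : R.

Definition Tm (sg : bool) : 'M[R]_(n + n) :=
  if sg then block_mx (mu *: r) 0 (1%:M + 1%:M) 0
  else block_mx (mu *: r) (- (1%:M + 1%:M)) 0 0.

Lemma rtilde_mul sg xi : rtilde_map r mu sg xi = xi *m Tm sg.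
Proof.
rewrite /rtilde_map /phi_inv Bp_mxE invBsw /Rmu /tmap.
rewrite -[xi](hsubmxK xi) /Bsw mul_row_block !mulmx0 !mulmx1 add0r addr0.
rewrite row_mxKl row_mxKr /Tm; case: sg.
  rewrite add_row_mx mul_row_block !mulmx0 addr0 addNr mulmxDr mulmx1 -scalemxAr.
  by rewrite addrA.
rewrite opp_row_mx add_row_mx mul_row_block !mulmx0 !addr0 mulmxN mulmxDr mulmx1.
by rewrite -scalemxAr addrK opprD.
Qed.

Lemma tensorE sg : tensor_of (rtilde_map r mu sg) = Tm sg.
Proof. by apply/matrixP => i j; rewrite mxE rtilde_mul /bvec -rowE mxE. Qed.

Lemma T_mul sg (a b : 'rV[R]_n) : row_mx a b *m Tm sg =
  if sg then row_mx (mu *: (a *m r) + (b + b)) 0 else row_mx (mu *: (a *m r)) (- (a + a)).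
Proof.
rewrite /Tm; case: sg; rewrite mul_row_block !mulmx0 ?mul0mx !addr0 -scalemxAr //.
  by rewrite mulmxDr mulmx1.
by rewrite mulmxN mulmxDr mulmx1.
Qed.

Lemma TT_mul (Hskew : r^T = - r) sg (a b : 'rV[R]_n) : row_mx a b *m (Tm sg)^T =
  if sg then row_mx (- (mu *: (a *m r))) (a + a) else row_mx (- (mu *: (a *m r)) - (b + b)) 0.
Proof.
rewrite /Tm; case: sg; rewrite tr_block_mx !trmx0 linearZ /= Hskew mul_row_block.
  by rewrite !mulmx0 !addr0 -scalemxAr mulmxN scalerN linearD /= trmx1 mulmxDr mulmx1.
by rewrite !mulmx0 !addr0 -scalemxAr mulmxN scalerN linearN linearD /= trmx1 mulmxN mulmxDr mulmx1.
Qed.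

Lemma main_true (Hlie : is_lie (brc c)) (Hskew : r^T = - r) (Hcybe : cybe (brc c) r)
  (x1 x2 x3 : 'rV[R]_(n + n)) :
  pair x1 (dbr (brc c) r (x2 *m (Tm true)^T) (x3 *m (Tm true)^T)) +
  pair x2 (dbr (brc c) r (x1 *m Tm true) (x3 *m (Tm true)^T)) +
  pair x3 (dbr (brc c) r (x1 *m Tm true) (x2 *m Tm true)) = 0.
Proof.
rewrite -[x1](hsubmxK x1) -[x2](hsubmxK x2) -[x3](hsubmxK x3).
set a1 := lsubmx x1; set b1 := rsubmx x1; set a2 := lsubmx x2; set b2 := rsubmx x2;
  set a3 := lsubmx x3; set b3 := rsubmx x3.
rewrite !T_mul !TT_mul // !Pdbr !row_mxKl !row_mxKr /PF. Kexp.
have F := rcybe_vec Hskew Hcybe a1 a2 a3; rewrite /Fr addrC in F.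
move/eqP: F; rewrite addr_eq0 => /eqP F.
rewrite (Kanti Hlie a2 b1 (a3 *m r)) (Kanti Hlie a3 b1 (a2 *m r)) (Kanti Hlie a1 (a3 *m r) (a2 *m r))
  (Kanti Hlie a2 (a3 *m r) (a1 *m r)) (Kanti Hlie a3 (a2 *m r) (a1 *m r)) F.
genK; rring.
Qed.

Lemma main_false (Hlie : is_lie (brc c)) (Hskew : r^T = - r) (Hcybe : cybe (brc c) r)
  (x1 x2 x3 : 'rV[R]_(n + n)) :
  pair x1 (dbr (brc c) r (x2 *m (Tm false)^T) (x3 *m (Tm false)^T)) +
  pair x2 (dbr (brc c) r (x1 *m Tm false) (x3 *m (Tm false)^T)) +
  pair x3 (dbr (brc c) r (x1 *m Tm false) (x2 *m Tm false)) = 0.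
Proof.
rewrite -[x1](hsubmxK x1) -[x2](hsubmxK x2) -[x3](hsubmxK x3).
set a1 := lsubmx x1; set b1 := rsubmx x1; set a2 := lsubmx x2; set b2 := rsubmx x2;
  set a3 := lsubmx x3; set b3 := rsubmx x3.
rewrite !T_mul !TT_mul // !Pdbr !row_mxKl !row_mxKr /PF. Kexp.
have F := rcybe_vec Hskew Hcybe a1 a2 a3; rewrite /Fr addrC in F.
move/eqP: F; rewrite addr_eq0 => /eqP F.
rewrite (Kanti Hlie a1 b2 (a3 *m r)) (Kanti Hlie a1 b3 b2) (Kanti Hlie a1 (a3 *m r) (a2 *m r))
  (Kanti Hlie a2 (a3 *m r) (a1 *m r)) (Kanti Hlie a3 (a2 *m r) (a1 *m r)) F.
genK; rring.
Qed.

Lemma dbr_sum p (f g : 'I_(n + n) -> R) :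
  \sum_(i < n + n) \sum_(k < n + n) f i * g k * dbr (brc c) r (bvec i) (bvec k) 0 p =
  pair (bvec p) (dbr (brc c) r (\row_i f i) (\row_k g k)).
Proof.
rewrite -(@bil_sum (n + n) (fun x y => pair (bvec p) (dbr (brc c) r x y))); last 2 first.
- by move=> k x x' y; rewrite Hlin_l.
- by move=> k x y y'; rewrite Hlin_r.
by apply: eq_bigr => i _; apply: eq_bigr => k _; rewrite pair_bvec.
Qed.

Lemma cybe_T (Hlie : is_lie (brc c)) (Hskew : r^T = - r) (Hcybe : cybe (brc c) r) sg :
  cybe (dbr (brc c) r) (Tm sg).
Proof.
move=> p q s.
rewrite (dbr_sum p (fun i => Tm sg i q) (fun k => Tm sg k s)).
rewrite (dbr_sum q (fun j => Tm sg p j) (fun k => Tm sg k s)).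
rewrite (dbr_sum s (fun j => Tm sg p j) (fun l => Tm sg q l)).
rewrite !rowT !rowN.
by case: sg; [apply: main_true | apply: main_false].
Qed.

Lemma Bsw_mul (a b : 'rV[R]_n) : row_mx a b *m Bsw = row_mx b a.
Proof. by rewrite /Bsw mul_row_block !mulmx0 !mulmx1 add0r addr0. Qed.
Lemma Bsw_tr : Bsw^T = Bsw.
Proof. by rewrite /Bsw tr_block_mx !trmx0 trmx1. Qed.

Lemma Bsw_inv (Hlie : is_lie (brc c)) (xi eta X : 'rV[R]_(n + n)) :
  pair xi (dbr (brc c) r X (eta *m Bsw)) + pair eta (dbr (brc c) r X (xi *m Bsw)) = 0.
Proof.
rewrite -[xi](hsubmxK xi) -[eta](hsubmxK eta) -[X](hsubmxK X) !Bsw_mul.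
rewrite !Pdbr !row_mxKl !row_mxKr /PF.
rewrite (Kanti Hlie (rsubmx X) (rsubmx eta) (rsubmx xi)).
genK; rring.
Qed.

Definition sgn (sg : bool) : R := if sg then 1 else -1.

Lemma symp_T (Hskew : r^T = - r) sg : symp (Tm sg) = sgn sg *: Bsw.
Proof.
have h : ((2%:R)^-1 + (2%:R)^-1 : R) = 1 by rewrite {3}(splitr 1) mul1r.
rewrite /symp /Tm /sgn /Bsw; case: sg; rewrite tr_block_mx !trmx0 linearZ /= Hskew.
  rewrite add_block_mx scalerN addrN !addr0 add0r linearD /= trmx1 scale_block_mx !scaler0.
  by rewrite scalerDr -scalerDl h !scale1r.
have tN : (- (1%:M + 1%:M) : 'M[R]_n)^T = - (1%:M + 1%:M).
  by apply/matrixP => i j; rewrite !mxE eq_sym.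
rewrite add_block_mx scalerN addrN !addr0 add0r tN scale_block_mx !scaler0.
by rewrite scalerN scalerDr -scalerDl h !scale1r scale_block_mx !scaler0 scaleN1r.
Qed.

Lemma HZr xi k X Y :
  pair xi (dbr (brc c) r X (k *: Y)) = k * pair xi (dbr (brc c) r X Y).
Proof. rewrite !Pdbr !linearZ /PF /=. Kexp. genK. rring. Qed.

Lemma sum_col X (Y : 'M[R]_(n + n)) p q :
  \sum_(i < n + n) Y i q * dbr (brc c) r X (bvec i) 0 p =
  pair (bvec p) (dbr (brc c) r X (bvec q *m Y^T)).
Proof.
rewrite -rowT (@lin_expand (n + n) (fun Z => pair (bvec p) (dbr (brc c) r X Z))); last first.
  by move=> k x y; rewrite Hlin_r.
by apply: eq_bigr => i _; rewrite pair_bvec [in RHS]mxE.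
Qed.
Lemma sum_row X (Y : 'M[R]_(n + n)) p q :
  \sum_(j < n + n) Y p j * dbr (brc c) r X (bvec j) 0 q =
  pair (bvec q) (dbr (brc c) r X (bvec p *m Y)).
Proof.
rewrite -rowN (@lin_expand (n + n) (fun Z => pair (bvec q) (dbr (brc c) r X Z))); last first.
  by move=> k x y; rewrite Hlin_r.
by apply: eq_bigr => i _; rewrite pair_bvec [in RHS]mxE.
Qed.

Lemma inv_T (Hlie : is_lie (brc c)) (Hskew : r^T = - r) sg :
  Defs.invariant (dbr (brc c) r) (symp (Tm sg)).
Proof.
rewrite symp_T // => X; apply/matrixP => p q.
have tS : (sgn sg *: Bsw)^T = sgn sg *: Bsw by rewrite linearZ /= Bsw_tr.
rewrite /ad_act [RHS]mxE [LHS]mxE sum_col sum_row tS.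
rewrite -(scalemxAr (sgn sg) (bvec q) Bsw) -(scalemxAr (sgn sg) (bvec p) Bsw).
rewrite (HZr (bvec p) (sgn sg) X (bvec q *m Bsw)) (HZr (bvec q) (sgn sg) X (bvec p *m Bsw)).
by rewrite -mulrDr Bsw_inv // mulr0.
Qed.

Lemma unit_T (Hskew : r^T = - r) sg : symp (Tm sg) \in unitmx.
Proof.
rewrite symp_T //.
have E : (sgn sg *: Bsw) *m (sgn sg *: Bsw) = 1%:M.
  rewrite -scalemxAl -scalemxAr scalerA Bsw2.
  by case: sg; rewrite /sgn ?mulrNN mulr1 scale1r.
by case: (mulmx1_unit E).
Qed.

Lemma final (Hlie : is_lie (brc c)) (Hskew : r^T = - r) (Hcybe : cybe (brc c) r) sg :
  factorizable_qt (dbr (brc c) r) (tensor_of (rtilde_map r mu sg)).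
Proof.
rewrite tensorE; split; [exact: cybe_T | exact: inv_T | exact: unit_T].
Qed.
End Main.

Theorem proposition4p9 (R : realFieldType) (n : nat)
  (c : 'I_n -> 'I_n -> 'rV[R]_n) (r : 'M[R]_n) (mu : R) (sg : bool) :
  is_lie (brc c) ->
  r^T = - r ->
  cybe (brc c) r ->
  factorizable_qt (dbr (brc c) r) (tensor_of (rtilde_map r mu sg)).
Proof. by move=> H1 H2 H3; apply: final. Qed.
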